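(* Let $R$ be a ring with $1=1_R$ and let $p\le q$ be a $1$-balanced lattice inequality in the variables $x_1,\dots,x_n$. Then the following are equivalent: (α1) for every unital left $R$-module $M$ and all $B_1,\dots,B_n\in\mathrm{Sub}\,M$, $p(B_1,\dots,B_n)\subseteq q(B_1,\dots,B_n)$; (α2) the paired-bipolar-graphs problem $\mathrm{Problem}(G_p,G_q,\phi,\psi,(R,+),1_R)$ with $\phi(i)=\xi_p(x_i)$ and $\psi(i)=\xi_q(x_i)$ has a solution.
   Context: $p\le q$ is $1$-balanced if every variable occurring in it occurs exactly once in $p$ and exactly once in $q$ (so $p$, $q$ are repetition-free in the same variables). For a repetition-free term $r$, the bipolar digraph $G_r$ (source $s_{G_r}$, sink $t_{G_r}$) and bijection $\xi_r$ from the variables of $r$ onto $E(G_r)$ are defined inductively: for a variable $x$, two vertices and one edge $\xi_r(x)$ from source to sink; for $r=r_1\vee r_2$, identify $t_{G_{r_1}}$ with $s_{G_{r_2}}$ (series composition, $s_{G_r}=s_{G_{r_1}}$, $t_{G_r}=t_{G_{r_2}}$); for $r=r_1\wedge r_2$, identify the two sources and the two sinks (parallel composition); $\xi_r=\xi_{r_1}\cup\xi_{r_2}$. Paired-bipolar-graphs problem $\mathrm{Problem}(G,H,\phi,\psi,\mathbf A,b)$: $G,H$ bipolar digraphs (acyclic, unique source and sink, at least two vertices) with $n$ edges, bijections $\phi\colon\{1,\dots,n\}\to E(G)$, $\psi\colon\{1,\dots,n\}\to E(H)$, $e_i=\phi(i)$, $e'_i=\psi(i)$, Abelian group $\mathbf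 A=(A;+)$, $b\in A$. For $\vec a\in A^n$, $X\subseteq\{1,\dots,n\}$, $\mathrm{Eff}_{\vec a}(X)(v)=\sum_{i\in X,\,h(e_i)=v}a_i-\sum_{i\in X,\,t(e_i)=v}a_i$ for $v\in V(G)$; $\mathrm{Tr}_b(s_G)=-b$, $\mathrm{Tr}_b(t_G)=b$, $\mathrm{Tr}_b(v)=0$ otherwise. $\vec a$ is a solution if $\mathrm{Eff}_{\vec a}(X)=\mathrm{Tr}_b$ for every $X$ such that $\{e'_j:j\in X\}$ is the edge set of a maximal directed path in $H$. *)

(* Defs.v *)
From HB Require Import structures.
From mathcomp Require Import all_boot all_order all_algebra.
Set Implicit Arguments. Unset Strict Implicit. Unset Printing Implicit Defensive.
Import GRing.Theory.
Local Open Scope ring_scope.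

(* Lattice terms; variable x_{i+1} is [LVar i]. *)
Inductive lterm := LVar of nat | LJoin of lterm & lterm | LMeet of lterm & lterm.

Fixpoint lcount (i : nat) (t : lterm) : nat :=
  match t with
  | LVar j => (j == i) : nat
  | LJoin t1 t2 => (lcount i t1 + lcount i t2)%N
  | LMeet t1 t2 => (lcount i t1 + lcount i t2)%N
  end.

Definition occurs (i : nat) (t : lterm) : bool := (0 < lcount i t)%N.

Definition one_balanced (n : nat) (p q : lterm) : Prop :=
  forall i, lcount i p = (if (i < n)%N then 1%N else 0%N) /\
            lcount i q = (if (i < n)%N then 1%N else 0%N).

Section Sub.
Variables (R : pzRingType) (M : lmodType R).

Definition submod (A : M -> Prop) : Prop :=
  [/\ A 0, (forall x y, A x -> A y -> A (x + y)) & (forall (r : R) x, A x -> A (r *: x))].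

Fixpoint leval (B : nat -> M -> Prop) (t : lterm) : M -> Prop :=
  match t with
  | LVar i => B i
  | LJoin t1 t2 => fun x => exists y z, [/\ leval B t1 y, leval B t2 z & x = y + z]
  | LMeet t1 t2 => fun x => leval B t1 x /\ leval B t2 x
  end.
End Sub.

(* Vertices are 0 .. nv-1, the source is 0 and the sink is 1.  Edges are
   labelled by the variables of r (this labelling is the bijection xi_r);
   the edge xi_r(x_i) goes from vertex [tl G i] to vertex [hd G i]. *)
Record bgraph := BGraph { nv : nat; tl : nat -> nat; hd : nat -> nat }.

Definition bsrc : nat := 0%N.
Definition bsnk : nat := 1%N.

Fixpoint graph_of (t : lterm) : bgraph :=
  match t with
  | LVar _ => BGraph 2 (fun _ => 0%N) (fun _ => 1%N)
  | LJoin t1 t2 =>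
      (* series: sink of G1 identified with source of G2 (new vertex m) *)
      let G1 := graph_of t1 in let G2 := graph_of t2 in
      let m := (nv G1 + nv G2 - 2)%N in
      let f1 v := if v == 1%N then m else v in
      let f2 v := if v == 0%N then m else if v == 1%N then 1%N
                  else (nv G1 + v - 2)%N in
      BGraph (nv G1 + nv G2 - 1)
        (fun i => if occurs i t1 then f1 (tl G1 i) else f2 (tl G2 i))
        (fun i => if occurs i t1 then f1 (hd G1 i) else f2 (hd G2 i))
  | LMeet t1 t2 =>
      (* parallel: sources identified, sinks identified *)
      let G1 := graph_of t1 in let G2 := graph_of t2 in
      let f2 v := if (v <= 1)%N then v else (nv G1 + v - 2)%N in
      BGraph (nv G1 + nv G2 - 2)
        (fun i => if occurs i t1 then tl G1 i else f2 (tl G2 i))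
        (fun i => if occurs i t1 then hd G1 i else f2 (hd G2 i))
  end.

Section Problem.
Variables (A : zmodType) (n : nat).

(* e_i = phi(i) is the edge of G labelled i; e'_i = psi(i) of H labelled i *)
Definition Eff (G : bgraph) (a : 'I_n -> A) (X : {set 'I_n}) (v : nat) : A :=
  \sum_(i in X | hd G i == v) a i - \sum_(i in X | tl G i == v) a i.

Definition Tr (b : A) (v : nat) : A :=
  if v == bsrc then - b else if v == bsnk then b else 0.

Definition dpath (H : bgraph) (s : seq 'I_n) : bool :=
  match s with
  | [::] => false
  | e :: _ => sorted (fun e1 e2 : 'I_n => hd H e1 == tl H e2) s &&
              uniq (tl H e :: [seq hd H f | f : 'I_n <- s])
  end.

Definition maxdpath (H : bgraph) (s : seq 'I_n) : Prop :=
  match s with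
  | [::] => False
  | e :: _ => [/\ dpath H s,
                 (forall j : 'I_n, hd H j <> tl H e) &
                 (forall j : 'I_n, tl H j <> hd H (last e s))]
  end.

Definition is_solution (G H : bgraph) (b : A) (a : 'I_n -> A) : Prop :=
  forall X : {set 'I_n},
    (exists s, maxdpath H s /\ X = [set e in s]) ->
    forall v, (v < nv G)%N -> Eff G a X v = Tr b v.

Definition has_solution (G H : bgraph) (b : A) : Prop :=
  exists a : 'I_n -> A, is_solution G H b a.
End Problem.

(* Main.v *)
Require Import Defs.
From HB Require Import structures.
Set Warnings "-notation-overridden,-ambiguous-paths".
From mathcomp Require Import all_boot all_order all_algebra.
From mathcomp Require Import zify.
Import Order.TTheory GRing.Theory Num.Theory.
Local Open Scope ring_scope.

Definition RF (t : lterm) := forall i, (lcount i t <= 1)%N.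

Lemma occJ i t1 t2 : occurs i (LJoin t1 t2) = occurs i t1 || occurs i t2.
Proof. by rewrite /occurs /= addn_gt0. Qed.
Lemma occM i t1 t2 : occurs i (LMeet t1 t2) = occurs i t1 || occurs i t2.
Proof. by rewrite /occurs /= addn_gt0. Qed.

Lemma RFJ t1 t2 : RF (LJoin t1 t2) -> [/\ RF t1, RF t2 &
   forall i, occurs i t2 -> occurs i t1 = false].
Proof.
move=> H; split=> [i|i|i]; have := H i; rewrite /occurs /=; lia.
Qed.
Lemma RFM t1 t2 : RF (LMeet t1 t2) -> [/\ RF t1, RF t2 &
   forall i, occurs i t2 -> occurs i t1 = false].
Proof.
move=> H; split=> [i|i|i]; have := H i; rewrite /occurs /=; lia.
Qed.

Lemma nv_ge2 t : (2 <= nv (graph_of t))%N.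
Proof. elim: t => [i|t1 IH1 t2 IH2|t1 IH1 t2 IH2] //=; lia. Qed.

Ltac gen_nv t1 t2 :=
  have := nv_ge2 t1; have := nv_ge2 t2;
  move: (nv (graph_of t1)) (nv (graph_of t2)) => x y hy hx.

Lemma ends_lt t i : occurs i t ->
  (tl (graph_of t) i < nv (graph_of t))%N /\ (hd (graph_of t) i < nv (graph_of t))%N.
Proof.
elim: t => [j|t1 IH1 t2 IH2|t1 IH1 t2 IH2] /=.
- by [].
- rewrite occJ; case: (boolP (occurs i t1)) => o1 /= o2.
  + case: (IH1 o1); move: (tl (graph_of t1) i) (hd (graph_of t1) i) => a b.
    clear IH1 IH2 o1 o2; gen_nv t1 t2; move=> ha hb; split; repeat case: ifP => ?; lia.
  + case: (IH2 o2); move: (tl (graph_of t2) i) (hd (graph_of t2) i) => a b.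
    clear IH1 IH2 o1 o2; gen_nv t1 t2; move=> ha hb; split; repeat case: ifP => ?; lia.
- rewrite occM; case: (boolP (occurs i t1)) => o1 /= o2.
  + case: (IH1 o1); move: (tl (graph_of t1) i) (hd (graph_of t1) i) => a b.
    clear IH1 IH2 o1 o2; gen_nv t1 t2; move=> ha hb; split; lia.
  + case: (IH2 o2); move: (tl (graph_of t2) i) (hd (graph_of t2) i) => a b.
    clear IH1 IH2 o1 o2; gen_nv t1 t2; move=> ha hb; split; repeat case: ifP => ?; lia.
Qed.

Lemma ends_ne t i : occurs i t ->
  (hd (graph_of t) i != 0%N) /\ (tl (graph_of t) i != 1%N).
Proof.
elim: t => [j|t1 IH1 t2 IH2|t1 IH1 t2 IH2] /=.
- by [].
- rewrite occJ; case: (boolP (occurs i t1)) => o1 /= o2.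
  + case: (IH1 o1); move: (tl (graph_of t1) i) (hd (graph_of t1) i) => a b.
    clear IH1 IH2 o1 o2; gen_nv t1 t2; move=> ha hb; split; repeat case: ifP => ?; lia.
  + case: (IH2 o2); move: (tl (graph_of t2) i) (hd (graph_of t2) i) => a b.
    clear IH1 IH2 o1 o2; gen_nv t1 t2; move=> ha hb; split; repeat case: ifP => ?; lia.
- rewrite occM; case: (boolP (occurs i t1)) => o1 /= o2.
  + by case: (IH1 o1).
  + case: (IH2 o2); move: (tl (graph_of t2) i) (hd (graph_of t2) i) => a b.
    clear IH1 IH2 o1 o2; gen_nv t1 t2; move=> ha hb; split; repeat case: ifP => ?; lia.
Qed.

Lemma sink_in t : RF t -> exists j, occurs j t /\ hd (graph_of t) j = 1%N.
Proof.
elim: t => [i|t1 IH1 t2 IH2|t1 IH1 t2 IH2] /=.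
- by exists i; rewrite /occurs /= eqxx.
- case/RFJ=> r1 r2 d; case: (IH2 r2) => j [oj hj]; exists j.
  by rewrite occJ oj orbT d // hj.
- case/RFM=> r1 r2 d; case: (IH1 r1) => j [oj hj]; exists j.
  by rewrite occM oj hj.
Qed.

Lemma source_out t : RF t -> exists j, occurs j t /\ tl (graph_of t) j = 0%N.
Proof.
elim: t => [i|t1 IH1 t2 IH2|t1 IH1 t2 IH2] /=.
- by exists i; rewrite /occurs /= eqxx.
- case/RFJ=> r1 r2 d; case: (IH1 r1) => j [oj hj]; exists j.
  by rewrite occJ oj hj.
- case/RFM=> r1 r2 d; case: (IH1 r1) => j [oj hj]; exists j.
  by rewrite occM oj hj.
Qed.

Lemma pred_in t i : RF t -> occurs i t -> tl (graph_of t) i != 0%N ->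
  exists j, occurs j t /\ hd (graph_of t) j = tl (graph_of t) i.
Proof.
elim: t i => [k|t1 IH1 t2 IH2|t1 IH1 t2 IH2] i /=.
- by [].
- move=> r; case/RFJ: (r) => r1 r2 d; rewrite occJ.
  case: (boolP (occurs i t1)) => o1 /= o2.
  + case: (tl (graph_of t1) i =P 0%N) => [->//|/eqP ne _].
    case: (IH1 i r1 o1 ne) => j [oj hj]; exists j.
    by rewrite occJ oj hj ?(negbTE ne).
  + have [e|ne] := eqVneq (tl (graph_of t2) i) 0%N; rewrite ?e => _.
    * case: (sink_in _ r1) => j [oj hj]; exists j.
      by rewrite occJ oj hj ?(negbTE ne).
    * case: (IH2 i r2 o2 ne) => j [oj hj]; exists j.
      by rewrite occJ oj orbT d // hj ?(negbTE ne).
- move=> r; case/RFM: (r) => r1 r2 d; rewrite occM.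
  case: (boolP (occurs i t1)) => o1 /= o2.
  + move=> ne; case: (IH1 i r1 o1 ne) => j [oj hj]; exists j.
    by rewrite occM oj hj ?(negbTE ne).
  + case: (tl (graph_of t2) i =P 0%N) => [->//|/eqP ne _].
    case: (IH2 i r2 o2 ne) => j [oj hj]; exists j.
    by rewrite occM oj orbT d // hj ?(negbTE ne).
Qed.

Lemma succ_out t i : RF t -> occurs i t -> hd (graph_of t) i != 1%N ->
  exists j, occurs j t /\ tl (graph_of t) j = hd (graph_of t) i.
Proof.
elim: t i => [k|t1 IH1 t2 IH2|t1 IH1 t2 IH2] i /=.
- by [].
- move=> r; case/RFJ: (r) => r1 r2 d; rewrite occJ.
  case: (boolP (occurs i t1)) => o1 /= o2.
  + have [e|ne] := eqVneq (hd (graph_of t1) i) 1%N; rewrite ?e => _.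
    * case: (source_out _ r2) => j [oj hj]; exists j.
      by rewrite occJ oj orbT d // hj ?(negbTE ne).
    * case: (IH1 i r1 o1 ne) => j [oj hj]; exists j.
      by rewrite occJ oj hj ?(negbTE ne).
  + have [e|ne] := eqVneq (hd (graph_of t2) i) 1%N; rewrite ?e.
    * by case: eqP.
    * move=> _; case: (IH2 i r2 o2 ne) => j [oj hj]; exists j.
      by rewrite occJ oj orbT d // hj ?(negbTE ne).
- move=> r; case/RFM: (r) => r1 r2 d; rewrite occM.
  case: (boolP (occurs i t1)) => o1 /= o2.
  + move=> ne; case: (IH1 i r1 o1 ne) => j [oj hj]; exists j.
    by rewrite occM oj hj ?(negbTE ne).
  + case: (hd (graph_of t2) i =P 1%N) => [->//|/eqP ne _].
    case: (IH2 i r2 o2 ne) => j [oj hj]; exists j.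
    by rewrite occM oj orbT d // hj ?(negbTE ne).
Qed.

Section Pot.
Variables (R : pzRingType) (M : lmodType R).

Lemma addKsub (c a b : M) : (c + a) - (c + b) = a - b.
Proof. by rewrite opprD addrACA subrr add0r. Qed.

Lemma pot_of_leval (B : nat -> M -> Prop) t x : leval B t x ->
  exists g : nat -> M, [/\ g 0%N = 0, g 1%N = x &
    forall i, occurs i t -> B i (g (hd (graph_of t) i) - g (tl (graph_of t) i))].
Proof.
elim: t x => [k|t1 IH1 t2 IH2|t1 IH1 t2 IH2] x /=.
- move=> Bx; exists (fun v => if v == 1%N then x else 0); split => // i.
  rewrite /occurs /=; case: eqP => // <- _; by rewrite /= subr0.
- case=> y [z [ly lz ->]].
  case: (IH1 y ly) => g1 [g10 g11 Hg1]; case: (IH2 z lz) => g2 [g20 g21 Hg2].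
  have h1 := nv_ge2 t1; have h2 := nv_ge2 t2.
  set m := (nv (graph_of t1) + nv (graph_of t2) - 2)%N.
  pose g w := if w == m then g1 1%N else if w == 1%N then g1 1%N + g2 1%N
      else if (w < nv (graph_of t1))%N then g1 w else g1 1%N + g2 (w + 2 - nv (graph_of t1))%N.
  have gf1 v : (v < nv (graph_of t1))%N -> g (if v == 1%N then m else v) = g1 v.
    move=> lv; have [->|nv1] := eqVneq v 1%N; first by rewrite /g !eqxx.
    rewrite /g.
    have -> : (v == m) = false by apply/eqP; rewrite /m; lia.
    by rewrite (negbTE nv1) lv.
  have gf2 v : (v < nv (graph_of t2))%N -> g (if v == 0%N then m else if v == 1%N then 1%N
        else (nv (graph_of t1) + v - 2)%N) = g1 1%N + g2 v.
    move=> lv; have [->|nv0] := eqVneq v 0%N; first by rewrite /g !eqxx g20 addr0.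
    have [->|nv1] := eqVneq v 1%N.
      by rewrite /g /=; have -> : (1 == m)%N = false by apply/eqP; rewrite /m; lia.
    rewrite /g.
    have -> : (nv (graph_of t1) + v - 2 == m)%N = false by apply/eqP; rewrite /m; lia.
    have -> : (nv (graph_of t1) + v - 2 == 1)%N = false by apply/eqP; lia.
    have -> : (nv (graph_of t1) + v - 2 < nv (graph_of t1))%N = false by apply/negbTE; lia.
    by congr (_ + g2 _); lia.
  exists g; split.
  + rewrite /g; have -> : (0 == m)%N = false by apply/eqP; rewrite /m; lia.
    by rewrite /= (leq_trans _ h1) // g10.
  + rewrite /g; have -> : (1 == m)%N = false by apply/eqP; rewrite /m; lia.
    by rewrite eqxx g11 g21.
  + move=> i; rewrite occJ; case: (boolP (occurs i t1)) => o1 /= o2.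
    * case: (ends_lt _ _ o1) => lt1 lh1.
      by rewrite !gf1 //; apply: Hg1.
    * case: (ends_lt _ _ o2) => lt1 lh1.
      by rewrite !gf2 // addKsub; apply: Hg2.
- case=> l1 l2.
  case: (IH1 x l1) => g1 [g10 g11 Hg1]; case: (IH2 x l2) => g2 [g20 g21 Hg2].
  have h1 := nv_ge2 t1; have h2 := nv_ge2 t2.
  pose g w := if (w < nv (graph_of t1))%N then g1 w else g2 (w + 2 - nv (graph_of t1))%N.
  have gf2 v : (v < nv (graph_of t2))%N -> g (if (v <= 1)%N then v
        else (nv (graph_of t1) + v - 2)%N) = g2 v.
    move=> lv; rewrite /g; case: (leqP v 1) => hv.
      rewrite (leq_trans _ h1) ?ltnS //.
      by case: v hv {lv} => [|[|]] //= _; rewrite ?g10 ?g20 ?g11 ?g21.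
    have -> : (nv (graph_of t1) + v - 2 < nv (graph_of t1))%N = false by apply/negbTE; lia.
    by congr (g2 _); lia.
  exists g; split.
  + by rewrite /g (leq_trans _ h1) // g10.
  + by rewrite /g (leq_trans _ h1) // g11.
  + move=> i; rewrite occM; case: (boolP (occurs i t1)) => o1 /= o2.
    * case: (ends_lt _ _ o1) => lt1 lh1.
      by rewrite /g lt1 lh1; apply: Hg1.
    * case: (ends_lt _ _ o2) => lt1 lh1.
      by rewrite !gf2 //; apply: Hg2.
Qed.

Lemma leval_of_pot (B : nat -> M -> Prop) t (g : nat -> M) : RF t ->
  (forall i, occurs i t -> B i (g (hd (graph_of t) i) - g (tl (graph_of t) i))) ->
  leval B t (g 1%N - g 0%N).
Proof.
elim: t g => [k|t1 IH1 t2 IH2|t1 IH1 t2 IH2] g /=.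
- by move=> _ H; apply: (H k); rewrite /occurs /= eqxx.
- case/RFJ=> r1 r2 d H.
  set m := (nv (graph_of t1) + nv (graph_of t2) - 2)%N.
  exists (g m - g 0%N), (g 1%N - g m); split.
  + have := IH1 (fun v => g (if v == 1%N then m else v)) r1; rewrite /= ?eqxx; apply.
    by move=> i oi; have := H i; rewrite occJ oi /=; apply.
  + have := IH2 (fun v => g (if v == 0%N then m else if v == 1%N then 1%N
        else (nv (graph_of t1) + v - 2)%N)) r2; rewrite /=; apply.
    by move=> i oi; have := H i; rewrite occJ oi orbT d //=; apply.
  + by rewrite [RHS]addrC addrA subrK.
- case/RFM=> r1 r2 d H; split.
  + by apply: IH1 r1 _ => i oi; have := H i; rewrite occM oi /=; apply.
  + have := IH2 (fun v => g (if (v <= 1)%N then v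
        else (nv (graph_of t1) + v - 2)%N)) r2.
    rewrite /=; apply.
    by move=> i oi; have := H i; rewrite occM oi orbT d //=; apply.
Qed.
End Pot.

Definition Bpos : nat -> int^o -> Prop := fun _ z => (0 < (z : int))%R.

Lemma leval_pos t : exists N : int, (0 <= N)%R /\ forall x : int, (N <= x)%R -> leval Bpos t (x : int^o).
Proof.
elim: t => [k|t1 [N1 [h1 H1]] t2 [N2 [h2 H2]]|t1 [N1 [h1 H1]] t2 [N2 [h2 H2]]] /=.
- exists 1; split => // x hx; rewrite /Bpos; lia.
- exists (N1 + N2); split; first lia.
  move=> x hx; exists (N1 : int^o), ((x - N1 : int) : int^o); split.
  + by apply: H1.
  + apply: H2; lia.
  + by rewrite /= addrC subrK.
- exists (N1 + N2); split; first lia.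
  move=> x hx; split; [apply: H1|apply: H2]; lia.
Qed.

Lemma pos_pot t : exists g : nat -> int, forall i, occurs i t ->
   (g (tl (graph_of t) i) < g (hd (graph_of t) i))%R.
Proof.
case: (leval_pos t) => N [_ H].
case: (@pot_of_leval _ _ _ _ _ (H N ltac:(lia))) => g [_ _ Hg].
exists g => i oi; have := Hg i oi; rewrite /Bpos subr_gt0; apply.
Qed.

Lemma path_ltg t n (g : nat -> int) (e : 'I_n) (s : seq 'I_n) :
  (forall i : 'I_n, occurs i t -> (g (tl (graph_of t) i) < g (hd (graph_of t) i))%R) ->
  (forall i : 'I_n, occurs i t) ->
  path (fun e1 e2 : 'I_n => hd (graph_of t) e1 == tl (graph_of t) e2) e s ->
  path (fun u v => (g u < g v)%R) (tl (graph_of t) e) [seq hd (graph_of t) i | i : 'I_n <- e :: s].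
Proof.
move=> Hg Ho; elim: s e => [|e2 s IH] e /=.
- by rewrite Hg.
- case/andP=> /eqP he ps; rewrite Hg //=.
  by have := IH e2 ps; rewrite /= he.
Qed.

Lemma path_uniq t n (e : 'I_n) (s : seq 'I_n) :
  (forall i : 'I_n, occurs i t) ->
  path (fun e1 e2 : 'I_n => hd (graph_of t) e1 == tl (graph_of t) e2) e s ->
  uniq (tl (graph_of t) e :: [seq hd (graph_of t) i | i : 'I_n <- e :: s]).
Proof.
move=> Ho ps; case: (pos_pot t) => g Hg.
have Hg' : forall i : 'I_n, occurs i t -> (g (tl (graph_of t) i) < g (hd (graph_of t) i))%R.
  by move=> i; apply: Hg.
have so := path_ltg _ _ _ _ _ Hg' Ho ps.
have tr : transitive (fun u v : nat => (g u < g v)%R) by move=> x y z; apply: lt_trans.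
have irr : irreflexive (fun u v : nat => (g u < g v)%R) by move=> x; apply: ltxx.
exact: (@sorted_uniq _ _ tr irr (tl (graph_of t) e :: [seq hd (graph_of t) i | i : 'I_n <- e :: s]) so).
Qed.

Inductive spath (n : nat) : lterm -> seq 'I_n -> Prop :=
| SPVar (j : 'I_n) : spath n (LVar j) [:: j]
| SPJoin t1 t2 s1 s2 : spath n t1 s1 -> spath n t2 s2 -> spath n (LJoin t1 t2) (s1 ++ s2)
| SPMeetL t1 t2 s : spath n t1 s -> spath n (LMeet t1 t2) s
| SPMeetR t1 t2 s : spath n t2 s -> spath n (LMeet t1 t2) s.
Arguments SPVar {n} j.
Arguments SPJoin {n t1 t2 s1 s2}.
Arguments SPMeetL {n t1} t2 {s}.
Arguments SPMeetR {n} t1 {t2 s}.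

Lemma spath_ex n t : (forall i, occurs i t -> (i < n)%N) -> exists s, spath n t s.
Proof.
elim: t => [k|t1 IH1 t2 IH2|t1 IH1 t2 IH2] H.
- have lk : (k < n)%N by apply: H; rewrite /occurs /= eqxx.
  by exists [:: Ordinal lk]; apply: (SPVar (Ordinal lk)).
- case: IH1 => [i oi|s1 h1]; first by apply: H; rewrite occJ oi.
  case: IH2 => [i oi|s2 h2]; first by apply: H; rewrite occJ oi orbT.
  by exists (s1 ++ s2); apply: SPJoin.
- case: IH1 => [i oi|s1 h1]; first by apply: H; rewrite occM oi.
  by exists s1; apply: SPMeetL.
Qed.

Arguments spath_ex {n t}.

Lemma spath_occ n t s : spath n t s -> forall i : 'I_n, i \in s -> occurs i t.
Proof.
elim=> [j|t1 t2 s1 s2 _ IH1 _ IH2|t1 t2 s0 _ IH|t1 t2 s0 _ IH] i.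
- by rewrite inE => /eqP ->; rewrite /occurs /= eqxx.
- by rewrite mem_cat occJ => /orP[/IH1->|/IH2->] //; rewrite orbT.
- by rewrite occM => /IH ->.
- by rewrite occM => /IH ->; rewrite orbT.
Qed.

Arguments spath_occ {n t s}.

Lemma spath_sum (R : pzRingType) (M : lmodType R) (B : nat -> M -> Prop) n t
   (c : 'I_n -> M) (x : M) :
  (forall i, occurs i t -> (i < n)%N) ->
  (forall i : 'I_n, occurs i t -> B i (c i)) ->
  (forall s, spath n t s -> \sum_(i <- s) c i = x) -> leval B t x.
Proof.
elim: t x => [k|t1 IH1 t2 IH2|t1 IH1 t2 IH2] x Hn HB Hs /=.
- have lk : (k < n)%N by apply: Hn; rewrite /occurs /= eqxx.
  have := Hs _ (SPVar (Ordinal lk)); rewrite big_seq1 => <-.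
  by apply: (HB (Ordinal lk)); rewrite /occurs /= eqxx.
- have Hn1 : forall i, occurs i t1 -> (i < n)%N by move=> i oi; apply: Hn; rewrite occJ oi.
  have Hn2 : forall i, occurs i t2 -> (i < n)%N by move=> i oi; apply: Hn; rewrite occJ oi orbT.
  case: (spath_ex Hn1) => s1 h1; case: (spath_ex Hn2) => s2 h2.
  exists (x - \sum_(i <- s2) c i), (x - \sum_(i <- s1) c i); split.
  + apply: IH1 => //; first by move=> i oi; apply: HB; rewrite occJ oi.
    by move=> s hs; rewrite -(Hs _ (SPJoin hs h2)) big_cat addrK.
  + apply: IH2 => //; first by move=> i oi; apply: HB; rewrite occJ oi orbT.
    by move=> s hs; rewrite -(Hs _ (SPJoin h1 hs)) big_cat addrAC subrr add0r.
  + rewrite -(Hs _ (SPJoin h1 h2)) big_cat addrK addrAC subrr add0r.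
    by [].
- split.
  + apply: IH1 => //; first by move=> i oi; apply: Hn; rewrite occM oi.
      by move=> i oi; apply: HB; rewrite occM oi.
    by move=> s hs; apply: Hs; apply: SPMeetL.
  + apply: IH2 => //; first by move=> i oi; apply: Hn; rewrite occM oi orbT.
      by move=> i oi; apply: HB; rewrite occM oi orbT.
    by move=> s hs; apply: Hs; apply: SPMeetR.
Qed.

Definition erel (G : bgraph) n := fun e1 e2 : 'I_n => hd G e1 == tl G e2.

Lemma spath_shape n t s : RF t -> spath n t s ->
  exists e s', [/\ s = e :: s', tl (graph_of t) e = 0%N,
     hd (graph_of t) (last e s') = 1%N & path (erel (graph_of t) n) e s'].
Proof.
move=> r sp; elim: sp r => [j|t1 t2 s1 s2 h1 IH1 h2 IH2|t1 t2 s0 h IH|t1 t2 s0 h IH] r.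
- by exists j, [::].
- case/RFJ: r => r1 r2 d.
  case: (IH1 r1) => e1 [s1' [Es1 tl1 hd1 p1]]; subst s1.
  case: (IH2 r2) => e2 [s2' [Es2 tl2 hd2 p2]]; subst s2.
  have o1 := spath_occ h1; have o2 := spath_occ h2.
  have oe1 : occurs e1 t1 by apply: o1; rewrite inE eqxx.
  have oe2 : occurs e2 t2 by apply: o2; rewrite inE eqxx.
  have ol1 : occurs (last e1 s1') t1 by apply: o1; apply: mem_last.
  have ol2 : occurs (last e2 s2') t2 by apply: o2; apply: mem_last.
  exists e1, (s1' ++ e2 :: s2'); split => //.
  + by rewrite /= oe1 tl1.
  + by rewrite last_cat /= d // hd2.
  + rewrite cat_path; apply/andP; split.
    * apply: (@sub_in_path _ [pred i : 'I_n | occurs i t1] (erel (graph_of t1) n)) p1.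
      - move=> a b oa ob /eqP hab; rewrite !inE /= in oa ob; by rewrite /erel /= oa ob hab.
      - by apply/allP => i /o1.
    * rewrite /= {1}/erel /= ol1 hd1 d // tl2 /= eqxx /=.
      apply: (@sub_in_path _ [pred i : 'I_n | occurs i t2] (erel (graph_of t2) n)) p2.
      - move=> a b oa ob /eqP hab; rewrite !inE /= in oa ob; by rewrite /erel /= !d // hab.
      - by apply/allP => i /o2.
- case/RFM: r => r1 r2 d.
  case: (IH r1) => e1 [s1' [Es1 tl1 hd1 p1]]; subst s0.
  have o1 := spath_occ h.
  have oe1 : occurs e1 t1 by apply: o1; rewrite inE eqxx.
  have ol1 : occurs (last e1 s1') t1 by apply: o1; apply: mem_last.
  exists e1, s1'; split => //.
  + by rewrite /= oe1 tl1.
  + by rewrite /= ol1 hd1.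
  + apply: (@sub_in_path _ [pred i : 'I_n | occurs i t1] (erel (graph_of t1) n)) p1.
    - move=> a b oa ob /eqP hab; rewrite !inE /= in oa ob; by rewrite /erel /= oa ob hab.
    - by apply/allP => i /o1.
- case/RFM: r => r1 r2 d.
  case: (IH r2) => e1 [s1' [Es1 tl1 hd1 p1]]; subst s0.
  have o1 := spath_occ h.
  have oe1 : occurs e1 t2 by apply: o1; rewrite inE eqxx.
  have ol1 : occurs (last e1 s1') t2 by apply: o1; apply: mem_last.
  exists e1, s1'; split => //.
  + by rewrite /= d // tl1.
  + by rewrite /= d // hd1.
  + apply: (@sub_in_path _ [pred i : 'I_n | occurs i t2] (erel (graph_of t2) n)) p1.
    - move=> a b oa ob /eqP hab; rewrite !inE /= in oa ob; by rewrite /erel /= !d // hab.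
    - by apply/allP => i /o1.
Qed.

Lemma bal_facts n p q : one_balanced n p q ->
  [/\ RF p, RF q, forall i, occurs i p = (i < n)%N & forall i, occurs i q = (i < n)%N].
Proof.
move=> H; split => i; case: (H i) => h1 h2; rewrite /occurs ?h1 ?h2;
  by case: (i < n)%N.
Qed.

Lemma telescope (V : zmodType) (G : bgraph) n (f : nat -> V) (e : 'I_n) s :
  path (erel G n) e s ->
  \sum_(i <- e :: s) (f (hd G i) - f (tl G i)) = f (hd G (last e s)) - f (tl G e).
Proof.
elim: s e => [|e2 s IH] e /=; first by rewrite big_seq1.
case/andP => /eqP he ps; rewrite big_cons IH // -he.
by rewrite [LHS]addrC addrA subrK.
Qed.

Lemma Trsum (R : pzRingType) (V : lmodType R) N (f : nat -> V) : (2 <= N)%N ->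
  \sum_(v < N) Tr (1 : R) v *: f v = f 1%N - f 0%N.
Proof.
case: N => [|[|N]] // _.
rewrite !big_ord_recl big1 => [|i _]; last by rewrite /Tr /= scale0r.
by rewrite /Tr /= scaleN1r scale1r addr0 addrC.
Qed.

Lemma effsum (R : pzRingType) (V : lmodType R) (G : bgraph) n (a : 'I_n -> R)
  (X : {set 'I_n}) (f : nat -> V) :
  (forall i : 'I_n, (hd G i < nv G)%N /\ (tl G i < nv G)%N) ->
  \sum_(i in X) a i *: (f (hd G i) - f (tl G i)) = \sum_(v < nv G) Eff G a X v *: f v.
Proof.
move=> Hlt.
have key : forall h : 'I_n -> nat, (forall i, h i < nv G)%N ->
  \sum_(v < nv G) (\sum_(i in X | h i == v) a i) *: f v = \sum_(i in X) a i *: f (h i).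
  move=> h hlt.
  under eq_bigr => v _ do rewrite scaler_suml big_mkcondr.
  rewrite exchange_big /=; apply: eq_bigr => i _.
  rewrite -big_mkcond /= (big_pred1 (Ordinal (hlt i))) //.
rewrite /Eff.
transitivity (\sum_(v < nv G) ((\sum_(i in X | hd G i == v) a i) *: f v
   - (\sum_(i in X | tl G i == v) a i) *: f v)); last first.
  by apply: eq_bigr => v _; symmetry; exact: scalerBl.
rewrite sumrB key; last by move=> i; case: (Hlt i).
rewrite key; last by move=> i; case: (Hlt i).
by rewrite -sumrB; apply: eq_bigr => i _; rewrite scalerBr.
Qed.

Lemma coordE (R : pzRingType) N (E : nat -> R) v (hv : (v < N)%N) :
  (\sum_(w < N) E w *: ([ffun u : 'I_N => ((val u == w)%:R : R^o)] : {ffun 'I_N -> R^o}))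
    (Ordinal hv) = E v.
Proof.
have sE : forall (r s : R), r *: (s : R^o) = r * s by [].
rewrite sum_ffunE (bigD1 (Ordinal hv)) //= !ffunE /= eqxx sE mulr1 big1 ?addr0 // => w nw.
rewrite !ffunE /= sE.
have -> : (v == w :> nat) = false.
  by apply/negbTE; apply: contra nw => /eqP e; apply/eqP; apply: val_inj.
by rewrite mulr0.
Qed.

Theorem lemma5p5 (R : pzRingType) (n : nat) (p q : lterm) :
  one_balanced n p q ->
  ((forall (M : lmodType R) (B : nat -> M -> Prop),
      (forall i, (i < n)%N -> submod (B i)) ->
      forall x : M, leval B p x -> leval B q x)
   <-> has_solution n (graph_of p) (graph_of q) (1 : R)).
Proof.
move=> bal; case: (bal_facts _ _ _ bal) => rp rq op oq.
have allq : forall i : 'I_n, occurs i q by move=> i; rewrite oq ltn_ord.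
have allp : forall i : 'I_n, occurs i p by move=> i; rewrite op ltn_ord.
have ltp : forall i : 'I_n, (hd (graph_of p) i < nv (graph_of p))%N /\
                            (tl (graph_of p) i < nv (graph_of p))%N.
  by move=> i; case: (ends_lt _ _ (allp i)).
split.
- move=> H.
  pose N := nv (graph_of p).
  pose M := {ffun 'I_N -> R^o}.
  pose ev (w : nat) : M := [ffun u : 'I_N => ((val u == w)%:R : R^o)].
  pose w (i : nat) := ev (hd (graph_of p) i) - ev (tl (graph_of p) i).
  pose B (i : nat) (m : M) := exists r : R, m = r *: w i.
  have Bsub : forall i, (i < n)%N -> submod (B i).
    move=> i _; split.
    + by exists 0; rewrite scale0r.
    + by move=> x y [r ->] [s ->]; exists (r + s); rewrite scalerDl.
    + by move=> r x [s ->]; exists (r * s); rewrite scalerA.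
  have lp : leval B p (ev 1%N - ev 0%N).
    apply: (@leval_of_pot R M B p ev rp) => i _.
    by exists 1; rewrite scale1r.
  have lq := H M B Bsub _ lp.
  case: (@pot_of_leval R M B q _ lq) => g [g0 g1 Hg].
  have : forall i : 'I_n, exists r : R, g (hd (graph_of q) i) - g (tl (graph_of q) i) = r *: w i.
    by move=> i; apply: Hg.
  case/fin_all_exists => a Ha.
  exists a => X [s [ms ->]] v hv.
  case: s ms => [//|e s'] [dp nin nout].
  move: dp; rewrite /dpath => /andP [ps un].
  have te : tl (graph_of q) e = 0%N.
    apply/eqP; apply: contraT => ne.
    case: (pred_in _ _ rq (allq e) ne) => j [oj hj].
    have lj : (j < n)%N by rewrite -oq.
    by case: (nin (Ordinal lj)).
  have hl : hd (graph_of q) (last e s') = 1%N.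
    apply/eqP; apply: contraT => ne.
    case: (succ_out _ _ rq (allq _) ne) => j [oj hj].
    have lj : (j < n)%N by rewrite -oq.
    by case: (nout (Ordinal lj)).
  have un' : uniq (tl (graph_of q) e :: [seq hd (graph_of q) i | i : 'I_n <- e :: s']) := un.
  have us : uniq (e :: s') by move: un'; rewrite cons_uniq => /andP [_ /map_uniq].
  have key : \sum_(i in [set x in e :: s']) a i *: w i = ev 1%N - ev 0%N.
    transitivity (\sum_(i <- e :: s') a i *: w i).
      by rewrite (big_uniq _ us); apply: eq_bigl => i; rewrite inE.
    under eq_bigr => i _ do rewrite -Ha.
    by rewrite (telescope _ _ _ _ _ _ ps) te hl g0 g1 subr0.
  have := effsum _ _ _ _ a [set x in e :: s'] ev ltp.
  rewrite key -(Trsum _ _ _ ev (nv_ge2 p)) => /(congr1 (fun m : M => m (Ordinal hv))).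
  by rewrite !coordE.
- move=> [a sol] M B Bsub x lp.
  case: (@pot_of_leval R M B p x lp) => f [f0 f1 Hf].
  pose c (i : 'I_n) := a i *: (f (hd (graph_of p) i) - f (tl (graph_of p) i)).
  apply: (@spath_sum R M B n q c x).
  + by move=> i; rewrite oq.
  + move=> i oi; case: (Bsub i (ltn_ord i)) => _ _ Hs; apply: Hs; apply: Hf.
    by rewrite op ltn_ord.
  + move=> s sp; case: (spath_shape _ _ _ rq sp) => e [s' [-> te hl ps]].
    have un := path_uniq _ _ _ _ allq ps.
    have mx : maxdpath (graph_of q) (e :: s').
      split.
      * by rewrite /dpath; apply/andP; split.
      * move=> j; rewrite te; case: (ends_ne _ _ (allq j)) => /eqP ? _ //.
      * move=> j; rewrite hl; case: (ends_ne _ _ (allq j)) => _ /eqP ? //.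
    have HE := sol [set x in e :: s'] (ex_intro _ (e :: s') (conj mx erefl)).
    have us : uniq (e :: s') by move: un; rewrite cons_uniq => /andP [_ /map_uniq].
    rewrite (big_uniq _ us).
    have -> : \sum_(i in e :: s') c i = \sum_(i in [set x in e :: s']) c i.
      by apply: eq_bigl => i; rewrite inE.
    rewrite effsum //.
    rewrite (eq_bigr (fun v : 'I_(nv (graph_of p)) => Tr (1 : R) v *: f v)).
      by rewrite Trsum ?nv_ge2 // f0 f1 subr0.
    by move=> v _; rewrite HE.
Qed.
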